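(* In $\mathbf{Sol}$ there exist geodesic triangles whose interior angle sum is larger than $\pi$, geodesic triangles whose interior angle sum is less than $\pi$, and geodesic triangles whose interior angle sum equals $\pi$.
   Context: $\mathbf{Sol}$ is $\mathbb{R}^3$ with coordinates $(x,y,z)$, with group law $(a,b,c)(x,y,z)=(x+ae^{-z},\,y+be^{z},\,z+c)$ and left-invariant Riemannian metric $ds^2=e^{2z}dx^2+e^{-2z}dy^2+dz^2$. A geodesic triangle consists of three points not on a common geodesic (vertices) and geodesic segments (sides) joining them pairwise; the interior angle at a vertex is the angle, measured with the Riemannian metric at that vertex, between the initial tangent vectors of the two sides issuing from that vertex. *)

(* Defs.v *)
From Stdlib Require Import Reals Lra.
From Coquelicot Require Import Coquelicot.
Open Scope R_scope.

Record pt := Pt { px : R; py : R; pz : R }.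

Record curve := Curve { cx : R -> R; cy : R -> R; cz : R -> R }.

Definition cpt (c : curve) (t : R) : pt := Pt (cx c t) (cy c t) (cz c t).

Definition sol_metric (p u v : pt) : R :=
  exp (2 * pz p) * px u * px v + exp (- (2 * pz p)) * py u * py v + pz u * pz v.

(* Geodesics of Sol: smooth (C^2) curves defined on all of R (Sol is complete)
   satisfying the geodesic equation  c'' + Gamma(c', c') = 0, where the
   Christoffel symbols of the metric above give
     x'' + 2 x' z' = 0,  y'' - 2 y' z' = 0,  z'' - e^{2z} x'^2 + e^{-2z} y'^2 = 0. *)
Definition is_geodesic (c : curve) : Prop :=
  (forall t, ex_derive (cx c) t /\ ex_derive (cy c) t /\ ex_derive (cz c) t) /\
  (forall t, ex_derive (Derive (cx c)) t /\ ex_derive (Derive (cy c)) t /\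
             ex_derive (Derive (cz c)) t) /\
  (forall t,
     Derive (Derive (cx c)) t + 2 * Derive (cx c) t * Derive (cz c) t = 0 /\
     Derive (Derive (cy c)) t - 2 * Derive (cy c) t * Derive (cz c) t = 0 /\
     Derive (Derive (cz c)) t - exp (2 * cz c t) * (Derive (cx c) t) ^ 2
       + exp (- (2 * cz c t)) * (Derive (cy c) t) ^ 2 = 0).

Definition velocity (c : curve) (t : R) : pt :=
  Pt (Derive (cx c) t) (Derive (cy c) t) (Derive (cz c) t).

Definition opp_vec (u : pt) : pt := Pt (- px u) (- py u) (- pz u).

Definition sol_angle (p u v : pt) : R :=
  acos (sol_metric p u v / sqrt (sol_metric p u u * sol_metric p v v)).

Definition on_common_geodesic (A B C : pt) : Prop :=
  exists c : curve, is_geodesic c /\ (exists t, velocity c t <> Pt 0 0 0) /\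
    exists a b d : R, cpt c a = A /\ cpt c b = B /\ cpt c d = C.

Definition geod_segment (c : curve) (P Q : pt) : Prop :=
  is_geodesic c /\ cpt c 0 = P /\ cpt c 1 = Q.

Definition geod_triangle (A B C : pt) (cAB cBC cCA : curve) : Prop :=
  ~ on_common_geodesic A B C /\
  geod_segment cAB A B /\ geod_segment cBC B C /\ geod_segment cCA C A.

(* Sum of the interior angles: at each vertex, the angle between the initial
   tangent vectors of the two sides issuing from it (a side traversed
   backwards has initial tangent minus the final velocity). *)
Definition angle_sum (A B C : pt) (cAB cBC cCA : curve) : R :=
  sol_angle A (velocity cAB 0) (opp_vec (velocity cCA 1)) +
  sol_angle B (velocity cBC 0) (opp_vec (velocity cAB 1)) +
  sol_angle C (velocity cCA 0) (opp_vec (velocity cBC 1)).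

(* Main.v *)
Require Import Defs.
From Stdlib Require Import Reals Lra FunctionalExtensionality Ranalysis5.
From Coquelicot Require Import Coquelicot.
Open Scope R_scope.

Definition arcX (x0 cc r a b : R) : curve :=
  Curve (fun _ => x0)
        (fun t => cc + r * ((exp (2*(a*t+b)) - 1) / (exp (2*(a*t+b)) + 1)))
        (fun t => ln (2*r) + (a*t+b) - ln (exp (2*(a*t+b)) + 1)).

Lemma arcX_dy x0 cc r a b : 0 < r -> forall t,
  is_derive (cy (arcX x0 cc r a b)) t
   (a*r*(4*exp (2*(a*t+b)))/(exp (2*(a*t+b))+1)^2).
Proof.
  intros Hr t. simpl. assert (H:= exp_pos (2*(a*t+b))).
  auto_derive. lra. field. lra.
Qed.

Lemma arcX_dz x0 cc r a b : 0 < r -> forall t,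
  is_derive (cz (arcX x0 cc r a b)) t
   (a*(1-exp (2*(a*t+b)))/(1+exp (2*(a*t+b)))).
Proof.
  intros Hr t. simpl. assert (H:= exp_pos (2*(a*t+b))).
  auto_derive. repeat split; lra. field. lra.
Qed.

Lemma Derive_eq f g : (forall t, is_derive f t (g t)) -> Derive f = g.
Proof. intros H. apply functional_extensionality. intros t. apply is_derive_unique, H. Qed.

Lemma exp2ln2 r a b t : 0 < r ->
  exp (2 * (ln (2*r) + (a*t+b) - ln (exp (2*(a*t+b)) + 1))) =
  4*r^2*exp (2*(a*t+b)) / (exp (2*(a*t+b))+1)^2.
Proof.
  intros Hr. assert (H:= exp_pos (2*(a*t+b))).
  replace (2 * (ln (2*r) + (a*t+b) - ln (exp (2*(a*t+b)) + 1))) with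
    ((ln (2*r) + ln (2*r)) + 2*(a*t+b) - (ln (exp (2*(a*t+b)) + 1) + ln (exp (2*(a*t+b)) + 1))) by ring.
  unfold Rminus. rewrite exp_plus, exp_Ropp, !exp_plus, !exp_ln by lra.
  field. lra.
Qed.

Lemma arcX_geod x0 cc r a b : 0 < r -> is_geodesic (arcX x0 cc r a b).
Proof.
  intros Hr.
  assert (Hx : Derive (cx (arcX x0 cc r a b)) = fun _ => 0).
  { apply Derive_eq. intros t. simpl. auto_derive; auto. }
  assert (Hy := Derive_eq _ _ (arcX_dy x0 cc r a b Hr)).
  assert (Hz := Derive_eq _ _ (arcX_dz x0 cc r a b Hr)).
  assert (Hyy : forall t, is_derive (Derive (cy (arcX x0 cc r a b))) t
     (8*a^2*r*exp (2*(a*t+b))*(1-exp (2*(a*t+b)))/(exp (2*(a*t+b))+1)^3)).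
  { intros t. rewrite Hy. assert (H:= exp_pos (2*(a*t+b))). auto_derive. all: try (repeat split; apply Rgt_not_eq; nra). field. repeat split; apply Rgt_not_eq; nra. }
  assert (Hzz : forall t, is_derive (Derive (cz (arcX x0 cc r a b))) t
     (-4*a^2*exp (2*(a*t+b))/(1+exp (2*(a*t+b)))^2)).
  { intros t. rewrite Hz. assert (H:= exp_pos (2*(a*t+b))). auto_derive. all: try (repeat split; apply Rgt_not_eq; nra). field. repeat split; apply Rgt_not_eq; nra. }
  split; [|split].
  - intros t. repeat split.
    + simpl. auto_derive; auto.
    + eexists; apply arcX_dy; auto.
    + eexists; apply arcX_dz; auto.
  - intros t. repeat split.
    + rewrite Hx. auto_derive; auto.
    + eexists; apply Hyy.
    + eexists; apply Hzz.
  - intros t. rewrite (is_derive_unique _ _ _ (Hyy t)), (is_derive_unique _ _ _ (Hzz t)).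
    rewrite Hx, Hy, Hz. assert (HD : Derive (fun _ : R => 0) t = 0) by (apply is_derive_unique; auto_derive; auto).
    rewrite HD.
    assert (H:= exp_pos (2*(a*t+b))).
    change (cz (arcX x0 cc r a b) t) with (ln (2*r) + (a*t+b) - ln (exp (2*(a*t+b)) + 1)).
    rewrite exp_Ropp, exp2ln2 by auto.
    repeat split; field; repeat split; try lra. 
    all: try (apply Rgt_not_eq, Rmult_lt_0_compat; lra).
Qed.

Lemma circ_pos r w Y : 0 < w -> r*r = Y*Y + w*w -> 0 < r -> 0 < r + Y /\ 0 < r - Y.
Proof. intros. split; nra. Qed.

Lemma circ_alg r w Y : 0 < w -> r*r = Y*Y + w*w -> 0 < r ->
  let q := (r+Y)/w in r*((q*q-1)/(q*q+1)) = Y /\ 2*r*q/(q*q+1) = w.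
Proof.
  intros Hw Hr Hr0 q. destruct (circ_pos r w Y Hw Hr Hr0) as [H1 H2].
  assert (E1 : q*q+1 = 2*r*(r+Y)/(w*w)).
  { unfold q. replace (2*r*(r+Y)) with ((r+Y)*(r+Y) + w*w) by nra. field. lra. }
  assert (E2 : q*q-1 = 2*Y*(r+Y)/(w*w)).
  { unfold q. replace (2*Y*(r+Y)) with ((r+Y)*(r+Y) - w*w) by nra. field. lra. }
  rewrite E1, E2. split.
  - field. lra.
  - unfold q. field. lra.
Qed.

Lemma arcX_vel x0 cc r a b t : 0 < r ->
  velocity (arcX x0 cc r a b) t =
  Pt 0 ((a/r) * exp (2 * cz (arcX x0 cc r a b) t)) ((a/r) * (cc - cy (arcX x0 cc r a b) t)).
Proof.
  intros Hr. unfold velocity.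
  rewrite (is_derive_unique _ _ _ (arcX_dy x0 cc r a b Hr t)),
          (is_derive_unique _ _ _ (arcX_dz x0 cc r a b Hr t)).
  assert (HD : Derive (cx (arcX x0 cc r a b)) t = 0) by (apply is_derive_unique; simpl; auto_derive; auto).
  rewrite HD. simpl cz. simpl cy. rewrite exp2ln2 by auto.
  assert (H:= exp_pos (2*(a*t+b))).
  f_equal; field; lra.
Qed.

Lemma exp2 z : exp (2*z) = exp z * exp z.
Proof. replace (2*z) with (z+z) by ring. apply exp_plus. Qed.

Lemma arcX_point cc r w Y (x0 z : R) : 0 < w -> r*r = Y*Y + w*w -> 0 < r -> w = exp z ->
  let s := ln ((r+Y)/w) in
  exists s', s' = s /\
  cc + r * ((exp (2*s) - 1) / (exp (2*s) + 1)) = cc + Y /\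
  ln (2*r) + s - ln (exp (2*s) + 1) = z.
Proof.
  intros Hw Hr Hr0 Hz s. exists s. split; auto.
  destruct (circ_pos r w Y Hw Hr Hr0) as [H1 H2].
  destruct (circ_alg r w Y Hw Hr Hr0) as [E1 E2].
  set (q := (r+Y)/w) in *.
  assert (Hq : 0 < q) by (unfold q; apply Rdiv_lt_0_compat; lra).
  assert (Es : exp (2*s) = q*q) by (unfold s; rewrite exp2, exp_ln; auto).
  rewrite Es. split. { rewrite E1. ring. }
  unfold s. rewrite <- ln_mult by lra. rewrite <- ln_div by nra.
  rewrite E2, Hz, ln_exp. auto.
Qed.

Definition ccX y0 z0 y1 z1 := (y1*y1 + exp (2*z1) - y0*y0 - exp (2*z0)) / (2*(y1-y0)).

Lemma arcX_exists x0 y0 z0 y1 z1 : y1 < y0 ->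
  exists c k, is_geodesic c /\ cpt c 0 = Pt x0 y0 z0 /\ cpt c 1 = Pt x0 y1 z1 /\ k < 0 /\
   velocity c 0 = Pt 0 (k*exp (2*z0)) (k*(ccX y0 z0 y1 z1 - y0)) /\
   velocity c 1 = Pt 0 (k*exp (2*z1)) (k*(ccX y0 z0 y1 z1 - y1)).
Proof.
  intros Hy. set (cc := ccX y0 z0 y1 z1).
  set (w0 := exp z0). set (w1 := exp z1).
  assert (Hw0 : 0 < w0) by apply exp_pos. assert (Hw1 : 0 < w1) by apply exp_pos.
  set (Y0 := y0 - cc). set (Y1 := y1 - cc).
  set (r := sqrt (Y0*Y0 + w0*w0)).
  assert (Hr0 : 0 < r) by (apply sqrt_lt_R0; nra).
  assert (Hrr0 : r*r = Y0*Y0 + w0*w0) by (apply sqrt_sqrt; nra).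
  assert (Hrr1 : r*r = Y1*Y1 + w1*w1).
  { rewrite Hrr0. unfold Y0, Y1, cc, ccX, w0, w1. rewrite !exp2. field. lra. }
  set (s0 := ln ((r+Y0)/w0)). set (s1 := ln ((r+Y1)/w1)).
  destruct (arcX_point cc r w0 Y0 x0 z0 Hw0 Hrr0 Hr0 eq_refl) as [_ [_ [P0y P0z]]].
  destruct (arcX_point cc r w1 Y1 x0 z1 Hw1 Hrr1 Hr0 eq_refl) as [_ [_ [P1y P1z]]].
  fold s0 in P0y, P0z. fold s1 in P1y, P1z.
  assert (Hs : s1 < s0).
  { unfold s0, s1. destruct (circ_pos r w0 Y0 Hw0 Hrr0 Hr0). destruct (circ_pos r w1 Y1 Hw1 Hrr1 Hr0).
    apply ln_increasing. apply Rdiv_lt_0_compat; lra.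
    assert (HY : Y1 < Y0) by (unfold Y0, Y1; lra).
    assert (0 < (r+Y1)/w1) by (apply Rdiv_lt_0_compat; lra).
    assert (0 < (r+Y0)/w0) by (apply Rdiv_lt_0_compat; lra).
    assert (Q1 : (r+Y1)/w1 * ((r+Y1)/w1) = -1 + 2*r/(r-Y1)).
    { field_simplify_eq; try lra. nra. }
    assert (Q0 : (r+Y0)/w0 * ((r+Y0)/w0) = -1 + 2*r/(r-Y0)).
    { field_simplify_eq; try lra. nra. }
    assert (2*r/(r-Y1) < 2*r/(r-Y0)).
    { unfold Rdiv. apply Rmult_lt_compat_l. lra. apply Rinv_lt_contravar; nra. }
    nra. }
  assert (C0 : cpt (arcX x0 cc r (s1-s0) s0) 0 = Pt x0 y0 z0).
  { unfold cpt; simpl. replace ((s1-s0)*0+s0) with s0 by ring. rewrite P0y, P0z. unfold Y0. f_equal. ring. }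
  assert (C1 : cpt (arcX x0 cc r (s1-s0) s0) 1 = Pt x0 y1 z1).
  { unfold cpt; simpl. replace ((s1-s0)*1+s0) with s1 by ring. rewrite P1y, P1z. unfold Y1. f_equal. ring. }
  exists (arcX x0 cc r (s1-s0) s0), ((s1-s0)/r).
  split; [apply arcX_geod; auto|].
  split; [auto|]. split; [auto|]. split.
  { apply Rdiv_neg_pos; lra. }
  rewrite !arcX_vel by auto.
  pose proof (f_equal py C0) as Ey0. pose proof (f_equal pz C0) as Ez0.
  pose proof (f_equal py C1) as Ey1. pose proof (f_equal pz C1) as Ez1.
  simpl in Ey0, Ez0, Ey1, Ez1. simpl cz. simpl cy.
  rewrite Ey0, Ez0, Ey1, Ez1. auto.
Qed.

Definition swapc (c : curve) : curve := Curve (cy c) (cx c) (fun t => - cz c t).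

Lemma Derive_opp_fun f : Derive (fun t => - f t) = fun t => - Derive f t.
Proof. apply functional_extensionality; intros t. apply Derive_opp. Qed.

Lemma swap_geod c : is_geodesic c -> is_geodesic (swapc c).
Proof.
  intros [H1 [H2 H3]]. unfold swapc. simpl.
  unfold is_geodesic; simpl. rewrite !Derive_opp_fun.
  split; [|split]; intros t.
  - destruct (H1 t) as [? [? ?]]. repeat split; auto. apply (ex_derive_opp (V:=R_NormedModule)); auto.
  - destruct (H2 t) as [? [? ?]]. repeat split; auto. apply (ex_derive_opp (V:=R_NormedModule)); auto.
  - destruct (H3 t) as [E1 [E2 E3]]. idtac.
    replace (2 * - cz c t) with (- (2 * cz c t)) by ring.
    rewrite Ropp_involutive. repeat split; nra.
Qed.

Lemma arcY_exists x0 y0 z0 x1 z1 : x1 < x0 ->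
  exists c k, is_geodesic c /\ cpt c 0 = Pt x0 y0 z0 /\ cpt c 1 = Pt x1 y0 z1 /\ k < 0 /\
   velocity c 0 = Pt (k*exp (2*(-z0))) 0 (- (k*(ccX x0 (-z0) x1 (-z1) - x0))) /\
   velocity c 1 = Pt (k*exp (2*(-z1))) 0 (- (k*(ccX x0 (-z0) x1 (-z1) - x1))).
Proof.
  intros Hx. destruct (arcX_exists y0 x0 (-z0) x1 (-z1) Hx) as [c [k [G [C0 [C1 [K [V0 V1]]]]]]].
  exists (swapc c), k. split; [apply swap_geod; auto|].
  unfold cpt, velocity in *. simpl.
  injection C0 as A0 B0 D0. injection C1 as A1 B1 D1.
  injection V0 as U0 W0 X0. injection V1 as U1 W1 X1.
  rewrite A0, B0, D0, A1, B1, D1, !Derive_opp, U0, W0, X0, U1, W1, X1.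
  rewrite !Ropp_involutive. repeat split; auto.
Qed.

Lemma mvt_all f df : (forall t, is_derive f t (df t)) -> forall a b, exists c, f b - f a = df c * (b-a).
Proof.
  intros H a b. destruct (MVT_cor4 f df a (Rabs (b-a)) (fun c _ => H c) b (Rle_refl _)) as [c [Hc _]].
  eauto.
Qed.

Lemma cons_x c : is_geodesic c -> forall t,
  is_derive (fun t => Derive (cx c) t * exp (2 * cz c t)) t 0.
Proof.
  intros [H1 [H2 H3]] t.
  destruct (H1 t) as [_ [_ Dz]]. destruct (H2 t) as [Dx _].
  destruct (H3 t) as [E _].
  apply Derive_correct in Dz. apply Derive_correct in Dx.
  evar (l : R). replace 0 with l.
  - apply (is_derive_mult (Derive (cx c)) (fun t => exp (2 * cz c t))). exact Dx.
    apply (is_derive_comp exp (fun t => 2 * cz c t)).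
    + apply is_derive_exp.
    + apply (is_derive_scal (cz c)). exact Dz.
    + intros; apply Rmult_comm.
  - unfold l. simpl. unfold plus, mult, scal; simpl. unfold mult; simpl.
    replace (Derive (Derive (cx c)) t) with (- 2 * Derive (cx c) t * Derive (cz c) t) by lra.
    ring.
Qed.

Lemma x_dichot c : is_geodesic c ->
  (forall a b, cx c a = cx c b) \/ (forall a b, a <> b -> cx c a <> cx c b).
Proof.
  intros G.
  set (h := fun t => Derive (cx c) t * exp (2 * cz c t)).
  assert (Hc : forall t, h t = h 0).
  { intros t. destruct (mvt_all h (fun _ => 0) (cons_x c G) 0 t) as [e He]. lra. }
  assert (Dx : forall t, is_derive (cx c) t (Derive (cx c) t)).
  { intros t. destruct G as [H1 _]. apply Derive_correct. apply (H1 t). }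
  destruct (Req_dec (h 0) 0) as [Z|NZ].
  - left. intros a b.
    destruct (mvt_all (cx c) (Derive (cx c)) Dx a b) as [e He].
    assert (Derive (cx c) e = 0).
    { specialize (Hc e). rewrite Z in Hc. unfold h in Hc.
      assert (0 < exp (2 * cz c e)) by apply exp_pos.
      destruct (Rmult_integral _ _ Hc); lra. }
    rewrite H in He. lra.
  - right. intros a b Hab Heq.
    destruct (mvt_all (cx c) (Derive (cx c)) Dx a b) as [e He].
    rewrite Heq in He.
    assert (Derive (cx c) e = 0).
    { assert (b - a <> 0) by lra.
      destruct (Rmult_integral (Derive (cx c) e) (b-a)); auto; lra. }
    apply NZ. rewrite <- (Hc e). unfold h. rewrite H. ring.
Qed.

Lemma noncol A B C : px A = px C -> px B <> px A -> A <> C -> ~ on_common_geodesic A B C.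
Proof.
  intros E1 E2 E3 [c [G [_ [a [b [d [Ha [Hb Hd]]]]]]]].
  destruct (x_dichot c G) as [K|K].
  - apply E2. rewrite <- Ha, <- Hb. unfold cpt; simpl. apply K.
  - destruct (Req_dec a d) as [->|Nad].
    + apply E3. rewrite <- Ha, <- Hd. auto.
    + apply (K a d Nad). rewrite <- Ha, <- Hd in E1. exact E1.
Qed.

Definition lineD : curve := Curve (fun t => 2*t) (fun t => 2*t) (fun _ => 0).

Lemma lineD_prop : is_geodesic lineD /\ forall t, velocity lineD t = Pt 2 2 0.
Proof.
  assert (D1 : Derive (fun t : R => 2*t) = fun _ => 2).
  { apply Derive_eq. intros t. auto_derive; auto; ring. }
  assert (D0 : Derive (fun _ : R => 0) = fun _ => 0).
  { apply Derive_eq. intros t. auto_derive; auto. }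
  assert (D2 : Derive (fun _ : R => 2) = fun _ => 0).
  { apply Derive_eq. intros t. auto_derive; auto. }
  unfold is_geodesic, velocity, lineD; simpl. rewrite D1, D0, D2.
  split; [split; [|split]|].
  - intros t. split; [|split]; auto_derive; auto.
  - intros t. split; [|split]; auto_derive; auto.
  - intros t. rewrite D0. rewrite ?Rmult_0_r, ?Ropp_0, ?exp_0. split; [|split]; ring.
  - auto.
Qed.

Lemma angle_scale p a1 a2 a3 b1 b2 b3 m n : 0 < m -> 0 < n ->
  sol_angle p (Pt (m*a1) (m*a2) (m*a3)) (Pt (n*b1) (n*b2) (n*b3)) =
  sol_angle p (Pt a1 a2 a3) (Pt b1 b2 b3).
Proof.
  intros Hm Hn. unfold sol_angle, sol_metric; simpl. f_equal.
  set (M := exp (2 * pz p) * a1 * b1 + exp (- (2 * pz p)) * a2 * b2 + a3 * b3).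
  set (X := (exp (2 * pz p) * a1 * a1 + exp (- (2 * pz p)) * a2 * a2 + a3 * a3) *
            (exp (2 * pz p) * b1 * b1 + exp (- (2 * pz p)) * b2 * b2 + b3 * b3)).
  replace ((exp (2 * pz p) * (m * a1) * (n * b1) + exp (- (2 * pz p)) * (m * a2) * (n * b2) + m * a3 * (n * b3)))
    with ((m*n) * M) by (unfold M; ring).
  replace ((exp (2 * pz p) * (m * a1) * (m * a1) + exp (- (2 * pz p)) * (m * a2) * (m * a2) +
     m * a3 * (m * a3)) * (exp (2 * pz p) * (n * b1) * (n * b1) + exp (- (2 * pz p)) * (n * b2) * (n * b2) +
     n * b3 * (n * b3))) with ((m*n)*(m*n) * X) by (unfold X; ring).
  rewrite sqrt_mult_alt by nra. rewrite sqrt_square by nra.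
  unfold Rdiv. rewrite Rinv_mult. transitivity ((m*n) * /(m*n) * (M * / sqrt X)). ring. rewrite Rinv_r. ring. nra.
Qed.

Lemma angle_scale' p u v a1 a2 a3 b1 b2 b3 m n : 0 < m -> 0 < n ->
  u = Pt (m*a1) (m*a2) (m*a3) -> v = Pt (n*b1) (n*b2) (n*b3) ->
  sol_angle p u v = sol_angle p (Pt a1 a2 a3) (Pt b1 b2 b3).
Proof. intros ? ? -> ->. apply angle_scale; auto. Qed.

Definition ccB s := ccX 2 (-0) 0 (-s).
Definition ccC s := ccX 2 s 0 0.

Definition F s :=
  sol_angle (Pt 0 0 0) (Pt 2 2 0) (Pt 0 (exp (2*0)) (ccC s - 0))
  + sol_angle (Pt 2 2 0) (Pt (- exp (2*(-0))) 0 (ccB s - 2)) (Pt (-2) (-2) (-0))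
  + sol_angle (Pt 0 2 s) (Pt 0 (- exp (2*s)) (- (ccC s - 2))) (Pt (exp (2*(-s))) 0 (- (ccB s - 0))).

Lemma family s : exists cAB cBC cCA,
  geod_triangle (Pt 0 0 0) (Pt 2 2 0) (Pt 0 2 s) cAB cBC cCA /\
  angle_sum (Pt 0 0 0) (Pt 2 2 0) (Pt 0 2 s) cAB cBC cCA = F s.
Proof.
  destruct (arcY_exists 2 2 0 0 s ltac:(lra)) as [cBC [k [GB [B0 [B1 [Hk [VB0 VB1]]]]]]].
  destruct (arcX_exists 0 2 s 0 0 ltac:(lra)) as [cCA [k' [GC [C0 [C1 [Hk' [VC0 VC1]]]]]]].
  destruct lineD_prop as [GA VA].
  exists lineD, cBC, cCA. split.
  - split. { apply noncol; simpl; try lra. intros H. injection H. lra. }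
    split; [|split].
    + split; auto. unfold cpt, lineD; simpl. split; f_equal; ring.
    + split; [auto|split; auto].
    + split; [auto|split; auto].
  - unfold angle_sum, F. rewrite !VA, VB0, VB1, VC0, VC1. unfold opp_vec; simpl.
    fold (ccB s). fold (ccC s).
    f_equal; [f_equal|].
    + apply (angle_scale' _ _ _ _ _ _ _ _ _ 1 (-k')); try lra; f_equal; ring.
    + apply (angle_scale' _ _ _ _ _ _ _ _ _ (-k) 1); try lra; f_equal; ring.
    + apply (angle_scale' _ _ _ _ _ _ _ _ _ (-k') (-k)); try lra; f_equal; ring.
Qed.

Lemma acos_lt x y : -1 <= x -> x < y -> y <= 1 -> acos y < acos x.
Proof.
  intros H1 H2 H3. destruct (acos_bound x). destruct (acos_bound y).
  destruct (Rlt_le_dec (acos y) (acos x)) as [L|L]; auto.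
  exfalso. destruct (Rle_lt_or_eq_dec _ _ L) as [L'|L'].
  - pose proof (cos_decreasing_1 _ _ H H0 H4 H5 L').
    rewrite !cos_acos in H6 by lra. lra.
  - assert (cos (acos x) = cos (acos y)) by (rewrite L'; auto).
    rewrite !cos_acos in H6 by lra. lra.
Qed.

Lemma acos_half : acos (1/2) = PI/3.
Proof. rewrite <- cos_PI3. apply acos_cos. pose proof PI_RGT_0. split; lra. Qed.

Lemma acos_s3 : acos (sqrt 3 / 2) = PI/6.
Proof. rewrite <- cos_PI6. apply acos_cos. pose proof PI_RGT_0. split; lra. Qed.

Lemma acos_pos_lt x : 0 < x -> acos x < PI/2.
Proof.
  intros H. destruct (Rlt_le_dec x 1).
  - rewrite acos_atan by auto. pose proof (atan_bound (sqrt (1 - x²) / x)). lra.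
  - unfold acos. destruct (Rle_dec x (-1)); [lra|]. destruct (Rle_dec 1 x); [|lra].
    pose proof PI_RGT_0. lra.
Qed.

Lemma ratio_bound M X : 0 < X -> M*M < X -> -1 < M / sqrt X < 1.
Proof.
  intros HX HM. assert (Hs : 0 < sqrt X) by (apply sqrt_lt_R0; auto).
  assert (Hss : sqrt X * sqrt X = X) by (apply sqrt_sqrt; lra).
  assert (Habs : -sqrt X < M < sqrt X) by (split; nra).
  split.
  - apply (Rmult_lt_reg_r (sqrt X)); auto. unfold Rdiv. rewrite Rmult_assoc, Rinv_l by lra. lra.
  - apply (Rmult_lt_reg_r (sqrt X)); auto. unfold Rdiv. rewrite Rmult_assoc, Rinv_l by lra. lra.
Qed.

Definition cC' e := (3+e)/4.
Definition cB' e := (5 - /e)/4.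
Definition hA e := 2 / sqrt (8*(1 + cC' e * cC' e)).
Definition hB e := 2 / sqrt (8*(1 + (cB' e - 2)*(cB' e - 2))).
Definition hC e := ((cC' e - 2) * cB' e) / sqrt ((e + (cC' e - 2)*(cC' e - 2)) * (/e + cB' e * cB' e)).
Definition G s := acos (hA (exp (2*s))) + acos (hB (exp (2*s))) + acos (hC (exp (2*s))).

Lemma exp2neg s : exp (2*(-s)) = / exp (2*s).
Proof. rewrite <- exp_Ropp. f_equal. ring. Qed.

Lemma F_G s : F s = G s.
Proof.
  assert (Hc : ccC s = cC' (exp (2*s))).
  { unfold ccC, ccX, cC'. rewrite ?Rmult_0_r, ?exp_0. field. }
  assert (Hb : ccB s = cB' (exp (2*s))).
  { unfold ccB, ccX, cB'. rewrite exp2neg. replace (2 * - 0) with 0 by ring. rewrite exp_0. field.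
    apply Rgt_not_eq, exp_pos. }
  unfold F, G, sol_angle, sol_metric; simpl. rewrite Hc, Hb.
  set (e := exp (2*s)). set (c := cC' e). set (b := cB' e).
  replace (2 * - 0) with 0 by ring. replace (-(2*0)) with 0 by ring. rewrite Rmult_0_r, exp_0.
  replace (2 * -s) with (-(2*s)) by ring. rewrite exp_Ropp. fold e.
  unfold hA, hB, hC. fold c b.
  assert (0 < e) by apply exp_pos.
  replace (2*0) with 0 by ring. rewrite exp_0.
  f_equal; [f_equal|]; f_equal; apply f_equal2; try (f_equal; field; lra); field; lra.
Qed.

Lemma G0 : G 0 > PI.
Proof.
  unfold G, hA, hB, hC, cC', cB'. rewrite Rmult_0_r, exp_0.
  replace ((3+1)/4) with 1 by field. replace ((5 - /1)/4) with 1 by field.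
  replace (8 * (1 + 1*1)) with (4*4) by ring.
  replace (8 * (1 + (1-2)*(1-2))) with (4*4) by ring.
  replace ((1 + (1-2)*(1-2)) * (/1 + 1*1)) with (2*2) by field.
  rewrite !sqrt_square by lra.
  replace (2/(4)) with (1/2) by field. replace ((1-2)*1/2) with (- (1/2)) by field.
  rewrite acos_opp, acos_half. pose proof PI_RGT_0. lra.
Qed.

Lemma ratio_gt_s3 M X : 0 < M -> 0 < X -> 3*X < 4*(M*M) -> sqrt 3 / 2 < M / sqrt X.
Proof.
  intros HM HX H.
  assert (Hs : 0 < sqrt X) by (apply sqrt_lt_R0; auto).
  assert (E : sqrt (3*X) < 2*M).
  { replace (2*M) with (sqrt ((2*M)*(2*M))) by (apply sqrt_square; lra).
    apply sqrt_lt_1; nra. }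
  rewrite sqrt_mult in E by lra.
  apply (Rmult_lt_reg_r (2 * sqrt X)). lra.
  unfold Rdiv. replace (M * / sqrt X * (2 * sqrt X)) with (2*M) by (field; lra).
  replace (sqrt 3 * / 2 * (2 * sqrt X)) with (sqrt 3 * sqrt X) by field. lra.
Qed.

Lemma ratio_gt_half Y : 0 < Y < 16 -> 1/2 < 2 / sqrt Y.
Proof.
  intros HY. assert (Hs : 0 < sqrt Y) by (apply sqrt_lt_R0; lra).
  assert (sqrt Y < 4).
  { replace 4 with (sqrt (4*4)) by (apply sqrt_square; lra). apply sqrt_lt_1; lra. }
  apply (Rmult_lt_reg_r (2*sqrt Y)). lra.
  replace (2 / sqrt Y * (2 * sqrt Y)) with 4 by (field; lra). lra.
Qed.

Lemma exp10 : 243 < exp (2*5).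
Proof.
  assert (H2 : 3 < exp 2) by (pose proof (exp_ineq1 2 ltac:(lra)); lra).
  replace (2*5) with (2+2+2+2+2) by ring. rewrite !exp_plus.
  assert (0 < exp 2) by apply exp_pos.
  assert (9 < exp 2 * exp 2) by nra.
  assert (27 < exp 2 * exp 2 * exp 2) by nra.
  assert (81 < exp 2 * exp 2 * exp 2 * exp 2) by nra. nra.
Qed.

Lemma G5 : G 5 < PI.
Proof.
  unfold G. set (e := exp (2*5)). assert (He := exp10). fold e in He.
  set (f := / e). assert (Hf : e * f = 1) by (unfold f; field; lra).
  assert (Hf0 : 0 < f) by (unfold f; apply Rinv_0_lt_compat; lra).
  assert (Hf1 : f < 1/243).
  { unfold f. unfold Rdiv. rewrite Rmult_1_l. apply Rinv_lt_contravar; lra. }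
  assert (A1 : acos (hA e) < PI/2).
  { apply acos_pos_lt. unfold hA. apply Rdiv_lt_0_compat. lra. apply sqrt_lt_R0. 
    unfold cC'. nra. }
  assert (A2 : acos (hB e) < PI/3).
  { rewrite <- acos_half. apply acos_lt. lra.
    - unfold hB. apply ratio_gt_half. unfold cB'. fold f. split; nra.
    - unfold hB. apply Rlt_le. set (t := cB' e - 2). assert (0 <= t*t) by nra.
      apply ratio_bound; lra. }
  assert (A3 : acos (hC e) < PI/6).
  { rewrite <- acos_s3. apply acos_lt.
    - pose proof (Rsqr_sqrt 3). assert (0 <= sqrt 3) by apply sqrt_pos. unfold Rsqr in H. nra.
    - unfold hC, cC', cB'. fold f. apply ratio_gt_s3.
      + apply Rmult_lt_0_compat; nra.
      + apply Rmult_lt_0_compat; nra.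
      + set (P := (3+e)/4 - 2). set (Q := (5 - f)/4).
        assert (HP : P = (e-5)/4) by (unfold P; field).
        assert (HQ1 : 1.2 <= Q) by (unfold Q; lra). assert (HQ2 : Q <= 1.25) by (unfold Q; lra).
        assert (HP2 : 1.05*(P*P) > 4.71*e) by (rewrite HP; nra).
        assert (Hfq : f + Q*Q <= 1.567) by nra.
        assert (0 < e + P*P) by nra.
        assert (X1 : (e + P*P) * (f + Q*Q) <= (e + P*P) * 1.567) by (apply Rmult_le_compat_l; lra).
        assert (X2 : 1.44 * (P*P) <= Q*Q*(P*P)) by (apply Rmult_le_compat_r; nra).
        nra.
    - unfold hC. apply Rlt_le. apply ratio_bound; unfold cC', cB'; fold f.
      + apply Rmult_lt_0_compat; nra.
      + set (P := (3+e)/4 - 2). set (Q := (5 - f)/4). assert (0 < Q) by (unfold Q; lra).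
        assert (0 < P) by (unfold P; lra). nra. }
  lra.
Qed.

Lemma cont_piece h s : ex_derive (fun s => h (exp (2*s))) s -> -1 < h (exp (2*s)) < 1 ->
  continuity_pt (fun s => acos (h (exp (2*s)))) s.
Proof.
  intros D B.
  apply (continuity_pt_comp (fun s => h (exp (2*s))) acos).
  - apply continuity_pt_filterlim. exact (ex_derive_continuous (K:=R_AbsRing) (V:=R_NormedModule) _ _ D).
  - apply derivable_continuous_pt, derivable_pt_acos. auto.
Qed.

Ltac possq := first [ apply Rmult_lt_0_compat; possq | nra ].
Ltac side := repeat match goal with |- _ /\ _ => split | |- True => exact I end;
  try (apply Rgt_not_eq, exp_pos);
  try (apply Rgt_not_eq, sqrt_lt_R0; possq);
  try possq.

Lemma G_cont s : continuity_pt G s.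
Proof.
  assert (He : 0 < exp (2*s)) by apply exp_pos.
  assert (Hi : 0 < / exp (2*s)) by (apply Rinv_0_lt_compat; auto).
  set (e := exp (2*s)) in He.
  unfold G. apply continuity_pt_plus; [apply continuity_pt_plus|]; apply cont_piece.
  - unfold hA, cC'. auto_derive. side.
  - unfold hA. apply ratio_bound; fold e; nra.
  - unfold hB, cB'. auto_derive. side.
  - unfold hB. fold e. set (t := cB' e - 2). assert (0 <= t*t) by nra. apply ratio_bound; lra.
  - unfold hC, cC', cB'. auto_derive. side.
  - unfold hC. fold e. set (P := cC' e - 2). set (Q := cB' e).
    assert (Hf : e * / e = 1) by (field; lra). assert (0 < / e) by (apply Rinv_0_lt_compat; lra).
    assert (E : (e + P*P) * (/e + Q*Q) = 1 + e*(Q*Q) + (P*P)*(/e) + (P*Q)*(P*Q)) by (field; lra).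
    assert (0 <= e*(Q*Q)) by nra. assert (0 <= (P*P)*(/e)) by nra. assert (0 <= (P*Q)*(P*Q)) by nra.
    apply ratio_bound; rewrite E; lra.
Qed.

Theorem theorem3p5 :
  (exists (A B C : pt) (cAB cBC cCA : curve),
     geod_triangle A B C cAB cBC cCA /\ angle_sum A B C cAB cBC cCA > PI) /\
  (exists (A B C : pt) (cAB cBC cCA : curve),
     geod_triangle A B C cAB cBC cCA /\ angle_sum A B C cAB cBC cCA < PI) /\
  (exists (A B C : pt) (cAB cBC cCA : curve),
     geod_triangle A B C cAB cBC cCA /\ angle_sum A B C cAB cBC cCA = PI).
Proof.
  split; [|split].
  - destruct (family 0) as [a [b [c [T E]]]].
    exists (Pt 0 0 0), (Pt 2 2 0), (Pt 0 2 0), a, b, c. split; auto.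
    rewrite E, F_G. apply G0.
  - destruct (family 5) as [a [b [c [T E]]]].
    exists (Pt 0 0 0), (Pt 2 2 0), (Pt 0 2 5), a, b, c. split; auto.
    rewrite E, F_G. apply G5.
  - destruct (IVT_interv (fun s => PI - G s) 0 5) as [s [_ Hs]].
    + intros a _. apply continuity_pt_minus. apply continuity_pt_const. intros x y; auto.
      apply G_cont.
    + lra.
    + pose proof G0. lra.
    + pose proof G5. lra.
    + destruct (family s) as [a [b [c [T E]]]].
      exists (Pt 0 0 0), (Pt 2 2 0), (Pt 0 2 s), a, b, c. split; auto.
      rewrite E, F_G. lra.
Qed.
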